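(* $\mathrm{ex}_3(5,\mathcal{B})=5$ and $\mathrm{ex}_3(6,\mathcal{B})=8$; that is, every triple system on $5$ vertices with at least $6$ triples contains a Berge-$K_4$ while some $5$-vertex triple system with $5$ triples does not, and every triple system on $6$ vertices with at least $9$ triples contains a Berge-$K_4$ while some $6$-vertex triple system with $8$ triples does not.
   Context: A triple system is a $3$-uniform hypergraph. A Berge-$K_4$ in a triple system is a configuration consisting of four distinct vertices $v_1,v_2,v_3,v_4$ and six distinct triples $e_{ij}$ ($1\le i<j\le 4$) of the system with $\{v_i,v_j\}\subset e_{ij}$. $\mathcal{B}$ denotes the family of Berge-$K_4$ configurations, and $\mathrm{ex}_3(n,\mathcal{B})$ is the maximum number of triples in a triple system on $n$ vertices containing no Berge-$K_4$. *)

(* Defs.v *)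
From mathcomp Require Import all_boot all_order.
Set Implicit Arguments. Unset Strict Implicit. Unset Printing Implicit Defensive.

Definition triple_system (n : nat) (H : {set {set 'I_n}}) : bool :=
  [forall e in H, #|e| == 3].

Definition has_BergeK4 (n : nat) (H : {set {set 'I_n}}) : Prop :=
  exists (v : 'I_4 -> 'I_n) (e : 'I_4 -> 'I_4 -> {set 'I_n}),
    injective v /\
    (forall i j : 'I_4, i < j -> e i j \in H /\ [set v i; v j] \subset e i j) /\
    (forall i j k l : 'I_4, i < j -> k < l -> e i j = e k l -> i = k /\ j = l).

(* Main.v *)
Require Import Defs.
From mathcomp Require Import all_boot all_order.
Set Implicit Arguments. Unset Strict Implicit. Unset Printing Implicit Defensive.

Definition tos n (t : seq nat) : {set 'I_n} := [set x : 'I_n | val x \in t].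
Lemma tosE n t (x : 'I_n) : (x \in tos n t) = ((x : nat) \in t).
Proof. by rewrite inE. Qed.
Set Implicit Arguments. Unset Strict Implicit. Unset Printing Implicit Defensive.

Definition trs n : seq (seq nat) :=
  [seq t <- flatten [seq flatten [seq [seq [:: a; b; c] | c <- iota 0 n] | b <- iota 0 n] | a <- iota 0 n]
   | (nth 0 t 0 < nth 0 t 1) && (nth 0 t 1 < nth 0 t 2)].
Definition quads n : seq (seq nat) :=
  [seq t <- flatten [seq flatten [seq flatten [seq [seq [:: a; b; c; d] | d <- iota 0 n] | c <- iota 0 n] | b <- iota 0 n] | a <- iota 0 n]
   | [&& nth 0 t 0 < nth 0 t 1, nth 0 t 1 < nth 0 t 2 & nth 0 t 2 < nth 0 t 3]].
Definition qpairs (q : seq nat) : seq (nat * nat) :=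
  let a := nth 0 q 0 in let b := nth 0 q 1 in let c := nth 0 q 2 in let d := nth 0 q 3 in
  [:: (a,b); (a,c); (a,d); (b,c); (b,d); (c,d)].
Fixpoint sdr (L : seq (seq nat)) (prs : seq (nat*nat)) (used : seq (seq nat)) : option (seq (seq nat)) :=
  match prs with
  | [::] => Some [::]
  | p :: ps =>
    (fix go (l : seq (seq nat)) :=
       match l with
       | [::] => None
       | t :: l' =>
         if [&& p.1 \in t, p.2 \in t & t \notin used] then
           match sdr L ps (t :: used) with Some r => Some (t :: r) | None => go l' end
         else go l'
       end) L
  end.
Fixpoint findq (L : seq (seq nat)) (qs : seq (seq nat)) : option (seq nat * seq (seq nat)) :=
  match qs with
  | [::] => None
  | q :: qs' => match sdr L (qpairs q) [::] with Some ts => Some (q, ts) | None => findq L qs' end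
  end.
Definition pidx (i j : nat) : nat := nth 0 (nth [::] [:: [::0;0;1;2]; [::0;0;3;4]; [::0;0;0;5]] i) j.
Definition wok (T : seq (seq nat)) n (L : seq (seq nat)) (vs : seq nat) (ts : seq (seq nat)) : bool :=
  [&& size vs == 4, uniq vs, all (fun x => x < n) vs, size ts == 6, uniq ts,
      all (fun t => t \in L) ts, all (fun t => t \in T) ts &
      all (fun i => all (fun j => (i < j) ==>
         ((nth 0 vs i \in nth [::] ts (pidx i j)) && (nth 0 vs j \in nth [::] ts (pidx i j)))) (iota 0 4)) (iota 0 4)].
Definition chk T Q n L := match findq L Q with Some (vs, ts) => wok T n L vs ts | None => false end.
Fixpoint ok T Q n K (ch rest : seq (seq nat)) : bool :=
  match rest with
  | [::] => size ch < K
  | x :: r => if size ch + size rest < K then true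
              else if chk T Q n (x :: ch) then ok T Q n K ch r
              else if ok T Q n K (x :: ch) r then ok T Q n K ch r else false
  end.
Fixpoint exsdr (L : seq (seq nat)) (prs : seq (nat*nat)) (used : seq (seq nat)) : bool :=
  match prs with
  | [::] => true
  | p :: ps => has (fun t => if [&& p.1 \in t, p.2 \in t & t \notin used] then exsdr L ps (t :: used) else false) L
  end.
Definition nok n (Hl : seq (seq nat)) : bool :=
  all (fun a => all (fun b => all (fun c => all (fun d =>
    if uniq [:: a; b; c; d] then ~~ exsdr Hl (qpairs [:: a; b; c; d]) [::] else true)
  (iota 0 n)) (iota 0 n)) (iota 0 n)) (iota 0 n).
Definition H5 : seq (seq nat) := [:: [::0;1;2]; [::0;1;3]; [::0;1;4]; [::0;2;3]; [::0;2;4]].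
Definition H6 : seq (seq nat) := [:: [::0;1;2]; [::0;1;3]; [::0;1;4]; [::0;1;5]; [::0;2;3]; [::0;4;5]; [::1;2;3]; [::1;4;5]].

Definition HK n (L : seq (seq nat)) := forall H : {set {set 'I_n}},
  (forall t, t \in L -> tos n t \in H) -> has_BergeK4 H.

Lemma HK_mono n L L' : HK n L -> {subset L <= L'} -> HK n L'.
Proof. by move=> hk sub H hH; apply: hk => t tL; apply: hH; apply: sub. Qed.

Lemma mem_trs n t : t \in trs n -> [/\ size t = 3, sorted ltn t & all (fun x => x < n) t].
Proof.
rewrite mem_filter => /andP [c /flatten_mapP [a ai /flatten_mapP [b bi /mapP [d di E]]]].
subst t; move: c ai bi di; rewrite /= !mem_iota /= !add0n => /andP[-> ->] -> -> ->.
by [].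
Qed.

Lemma trs_mem n a b c : a < b -> b < c -> c < n -> [:: a; b; c] \in trs n.
Proof.
move=> ab bc cn; rewrite mem_filter /= ab bc /=.
have bn : b < n by apply: ltn_trans cn.
have an : a < n by apply: ltn_trans bn.
apply/flatten_mapP; exists a; first by rewrite mem_iota.
apply/flatten_mapP; exists b; first by rewrite mem_iota.
by apply/mapP; exists c; first by rewrite mem_iota.
Qed.

Lemma tos_inj n t t' : t \in trs n -> t' \in trs n -> tos n t = tos n t' -> t = t'.
Proof.
move=> /mem_trs [_ st at_] /mem_trs [_ st' at'] h.
apply: (irr_sorted_eq ltn_trans ltnn st st') => x.
case: (ltnP x n) => [xn|xn].
  by have := congr1 (fun S : {set 'I_n} => (Ordinal xn) \in S) h; rewrite !inE.
apply/idP/idP => xt.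
  by have := allP at_ x xt; rewrite ltnNge xn.
by have := allP at' x xt; rewrite ltnNge xn.
Qed.

Lemma card_tos m t : t \in trs m.+1 -> #|tos m.+1 t| = 3.
Proof.
move=> /mem_trs [s3 st at_].
have -> : #|tos m.+1 t| = #|[seq (inord x : 'I_m.+1) | x <- t]|.
  apply: eq_card => x; rewrite tosE; apply/idP/mapP.
    by move=> xt; exists (val x) => //; rewrite inord_val.
  by move=> [y yt ->]; rewrite inordK // (allP at_ y yt).
have/card_uniqP -> : uniq [seq (inord x : 'I_m.+1) | x <- t].
  rewrite map_inj_in_uniq ?(sorted_uniq ltn_trans ltnn st) //.
  move=> x y xt yt /(congr1 val) /=; rewrite !inordK //.
    exact: allP at_ y yt.
  exact: allP at_ x xt.
by rewrite size_map.
Qed.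

Lemma canonP n (e : {set 'I_n}) : #|e| = 3 ->
  sort leq (map val (enum e)) \in trs n /\ tos n (sort leq (map val (enum e))) = e.
Proof.
move=> ce; set s := sort leq _.
have us : uniq s by rewrite sort_uniq map_inj_uniq ?enum_uniq //; apply: val_inj.
have ss : sorted ltn s by rewrite ltn_sorted_uniq_leq us sort_sorted //; apply: leq_total.
have sz : size s = 3 by rewrite size_sort size_map -cardE.
have sn : forall x, x \in s -> x < n by move=> x; rewrite mem_sort => /mapP [y _ ->]; exact: ltn_ord.
split.
  clear us; move: ss sz sn; case: s => [|a [|b [|c [|]]]] //= /andP[ab /andP[bc _]] _ sn.
  by apply: trs_mem => //; apply: sn; rewrite !inE eqxx ?orbT.
apply/setP => x; rewrite inE mem_sort.
by rewrite (mem_map val_inj) mem_enum.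
Qed.

Lemma pidx_lt (i j : 'I_4) : i < j -> pidx i j < 6.
Proof.
have : all (fun i => all (fun j => (i < j) ==> (pidx i j < 6)) (iota 0 4)) (iota 0 4) by [].
move=> /allP /(_ i); rewrite mem_iota ltn_ord => /(_ isT) /allP /(_ j).
by rewrite mem_iota ltn_ord => /(_ isT) /implyP.
Qed.

Lemma pidx_inj (i j k l : 'I_4) : i < j -> k < l -> pidx i j = pidx k l -> i = k /\ j = l.
Proof.
have : all (fun i => all (fun j => all (fun k => all (fun l =>
   (i < j) ==> (k < l) ==> (pidx i j == pidx k l) ==> (i == k) && (j == l))
   (iota 0 4)) (iota 0 4)) (iota 0 4)) (iota 0 4) by [].
move=> /allP /(_ i); rewrite mem_iota ltn_ord => /(_ isT) /allP /(_ j).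
rewrite mem_iota ltn_ord => /(_ isT) /allP /(_ k).
rewrite mem_iota ltn_ord => /(_ isT) /allP /(_ l).
rewrite mem_iota ltn_ord => /(_ isT) h ij kl e.
move: h; rewrite ij kl e eqxx /= => /andP [/eqP h1 /eqP h2].
by split; apply: val_inj.
Qed.

Lemma wok_sound m L vs ts : wok (trs m.+1) m.+1 L vs ts -> HK m.+1 L.
Proof.
move=> /andP [/eqP s4 /andP [uv /andP [av /andP [/eqP s6 /andP [ut /andP [aL /andP [aT ap]]]]]]].
move=> H hH.
have vlt : forall i : 'I_4, nth 0 vs i < m.+1.
  by move=> i; apply: (allP av); apply: mem_nth; rewrite s4.
have tin : forall i j : 'I_4, i < j -> nth [::] ts (pidx i j) \in ts.
  by move=> i j ij; apply: mem_nth; rewrite s6 pidx_lt.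
have cont : forall i j : 'I_4, i < j ->
   (nth 0 vs i \in nth [::] ts (pidx i j)) && (nth 0 vs j \in nth [::] ts (pidx i j)).
  move=> i j ij; move: ap => /allP /(_ i); rewrite mem_iota ltn_ord => /(_ isT) /allP /(_ j).
  by rewrite mem_iota ltn_ord => /(_ isT) /implyP; apply.
exists (fun i => inord (nth 0 vs i)), (fun i j => tos m.+1 (nth [::] ts (pidx i j))).
split; [|split].
- move=> i j /(congr1 val) /=; rewrite !inordK // => /eqP.
  by rewrite nth_uniq ?s4 // => /eqP /val_inj.
- move=> i j ij; split.
    by apply: hH; apply: (allP aL); apply: tin.
  apply/subsetP => x; rewrite !inE => /orP [] /eqP -> /=; rewrite inordK //;
  by case/andP: (cont i j ij).
- move=> i j k l ij kl /tos_inj e.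
  have /eqP : nth [::] ts (pidx i j) = nth [::] ts (pidx k l).
    by apply: e; apply: (allP aT); apply: tin.
  rewrite nth_uniq ?s6 ?pidx_lt // => /eqP.
  exact: pidx_inj.
Qed.

Lemma chk_sound m Q L : chk (trs m.+1) Q m.+1 L -> HK m.+1 L.
Proof. by rewrite /chk; case: (findq L Q) => [[vs ts]|] // /wok_sound. Qed.

Lemma ok_sound T Q n K (chkS : forall L, chk T Q n L -> HK n L) rest :
  forall ch, ok T Q n K ch rest ->
  forall mm, K <= size ch + size (mask mm rest) -> HK n (ch ++ mask mm rest).
Proof.
elim: rest => [|x r IH] ch /=.
  by move=> h mm; rewrite mask0 addn0 leqNgt h.
case: ifP => [hlt _ mm hK|_ H].
  have := size_subseq (mask_subseq mm (x :: r)).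
  move=> hs; move: hlt; rewrite ltnNge => /negP []; apply: leq_trans hK _.
  by rewrite leq_add2l.
have Hr : ok T Q n K ch r.
  by move: H; case: (chk _ _ _ _) => //; case: (ok _ _ _ _ _ r).
have Hx : forall m', K <= (size ch).+1 + size (mask m' r) -> HK n ((x :: ch) ++ mask m' r).
  move=> m' hm; move: H; case hc: (chk _ _ _ _) => H.
    by apply: HK_mono (chkS _ hc) _ => y; rewrite mem_cat => ->.
  by move: H; case ho: (ok _ _ _ _ _ r) => // _; apply: IH.
case=> [|[] m'] /= hm.
- by have := IH ch Hr [::]; apply.
- have := Hx m'; rewrite addSn -addnS => /(_ hm) h.
  apply: HK_mono h _ => y; rewrite /= !inE !mem_cat !inE.
  by case/orP => [->|/orP [] ->]; rewrite ?orbT.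
- exact: IH.
Qed.

Lemma main m K Q : ok (trs m.+1) Q m.+1 K [::] (trs m.+1) ->
  forall H : {set {set 'I_m.+1}}, triple_system H -> K <= #|H| -> has_BergeK4 H.
Proof.
move=> hok H /forallP tsH hK.
set L := [seq t <- trs m.+1 | tos m.+1 t \in H].
have hkL : HK m.+1 L.
  rewrite /L filter_mask.
  apply: (ok_sound (@chk_sound m Q) hok).
  rewrite /= -filter_mask; apply: leq_trans hK _.
  rewrite add0n -(size_map (tos m.+1)); apply: leq_trans (card_size _).
  apply: subset_leq_card; apply/subsetP => e eH.
  have /eqP ce := implyP (tsH e) eH.
  have [cT cE] := canonP ce.
  by rewrite -cE; apply: map_f; rewrite mem_filter cE eH cT.
by apply: hkL => t; rewrite mem_filter => /andP [].
Qed.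

Lemma exsdr_complete (L : seq (seq nat)) : forall (prs : seq (nat * nat)) (used ts : seq (seq nat)),
  all2 (fun (t : seq nat) (p : nat * nat) => [&& t \in L, p.1 \in t & p.2 \in t]) ts prs ->
  uniq ts -> all (fun t => t \notin used) ts -> exsdr L prs used.
Proof.
elim => [|p ps IH] used [|t ts] //= /andP [/and3P [tL p1 p2] ha] /andP [tnts hu] /andP [tnu hall].
apply/hasP; exists t => //; rewrite p1 p2 tnu /=.
apply: (IH (t :: used) ts ha hu); apply/allP => y yts; rewrite inE negb_or (allP hall y yts) andbT.
by apply/eqP => yt; move: tnts; rewrite -yt yts.
Qed.

Definition o0 : 'I_4 := @Ordinal 4 0 isT.
Definition o1 : 'I_4 := @Ordinal 4 1 isT.
Definition o2 : 'I_4 := @Ordinal 4 2 isT.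
Definition o3 : 'I_4 := @Ordinal 4 3 isT.

Lemma nok_sound m Hl : nok m.+1 Hl ->
  ~ has_BergeK4 [set e : {set 'I_m.+1} | e \in map (tos m.+1) Hl].
Proof.
move=> hn [v [e [vinj [He Hd]]]].
pose g E := nth [::] Hl (index E (map (tos m.+1) Hl)).
have gP : forall E, E \in map (tos m.+1) Hl -> g E \in Hl /\ tos m.+1 (g E) = E.
  move=> E EH; have ix : index E (map (tos m.+1) Hl) < size Hl by rewrite -(size_map (tos m.+1)) index_mem.
  split; first by apply: mem_nth.
  by rewrite /g -(nth_map [::] (tos m.+1 [::])) // nth_index.
have pr : forall i j : 'I_4, i < j ->
   [&& g (e i j) \in Hl, nat_of_ord (v i) \in g (e i j) & nat_of_ord (v j) \in g (e i j)].
  move=> i j ij; have [eH sub] := He i j ij; rewrite inE in eH.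
  have [gin gt] := gP _ eH; rewrite gin /=.
  have vi : v i \in e i j by apply: (subsetP sub); rewrite !inE eqxx.
  have vj : v j \in e i j by apply: (subsetP sub); rewrite !inE eqxx orbT.
  by rewrite -!tosE gt vi vj.
have vinj' : injective (fun i => nat_of_ord (v i)) by move=> i j /ord_inj /vinj.
have mi : forall i : 'I_4, nat_of_ord (v i) \in iota 0 m.+1 by move=> i; rewrite mem_iota ltn_ord.
move: hn => /allP /(_ _ (mi o0)) /allP /(_ _ (mi o1)) /allP /(_ _ (mi o2)) /allP /(_ _ (mi o3)).
have Hu : uniq (map (fun i => nat_of_ord (v i)) [:: o0; o1; o2; o3]) by rewrite (map_inj_uniq vinj').
case: ifP => [_|]; last by move/negP; case; exact: Hu.
move/negP; apply.
pose P := [:: (o0, o1); (o0, o2); (o0, o3); (o1, o2); (o1, o3); (o2, o3)].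
apply: (@exsdr_complete _ _ _ (map (fun p => g (e p.1 p.2)) P)).
- by rewrite /= !pr.
- have aP : all (fun p : 'I_4 * 'I_4 => p.1 < p.2) P by [].
  rewrite map_inj_in_uniq //.
  move=> [i j] [k l] /(allP aP) /= ij /(allP aP) /= kl h.
  have [ei _] := He i j ij; have [ek _] := He k l kl.
  rewrite inE in ei; rewrite inE in ek.
  have := congr1 (tos m.+1) h; rewrite (gP _ ei).2 (gP _ ek).2 => /(Hd _ _ _ _ ij kl).
  by case=> -> ->.
- by apply/allP => t _; rewrite in_nil.
Qed.

Lemma example m Hl : nok m.+1 Hl -> uniq Hl -> all (fun t => t \in trs m.+1) Hl ->
  exists H : {set {set 'I_m.+1}}, [/\ triple_system H, #|H| = size Hl & ~ has_BergeK4 H].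
Proof.
move=> hn hu ht.
exists [set e : {set 'I_m.+1} | e \in map (tos m.+1) Hl]; split.
- apply/forallP => e; apply/implyP; rewrite inE => /mapP [t tH ->].
  by rewrite card_tos // (allP ht).
- rewrite cardsE; have/card_uniqP -> : uniq (map (tos m.+1) Hl).
    rewrite map_inj_in_uniq // => x y xH yH; apply: tos_inj; exact: (allP ht).
  by rewrite size_map.
- exact: nok_sound.
Qed.

Lemma ok5 : ok (trs 5) (quads 5) 5 6 [::] (trs 5). Proof. vm_compute. reflexivity. Qed.
Lemma nok5 : nok 5 H5. Proof. vm_compute. reflexivity. Qed.
Lemma nok6 : nok 6 H6. Proof. vm_compute. reflexivity. Qed.
Lemma ok6 : ok (trs 6) (quads 6) 6 9 [::] (trs 6). Proof. vm_compute. reflexivity. Qed.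

Theorem theorem2 :
  (* ex_3(5,B) = 5 *)
  ((forall H : {set {set 'I_5}}, triple_system H -> 6 <= #|H| -> has_BergeK4 H) /\
   (exists H : {set {set 'I_5}}, [/\ triple_system H, #|H| = 5 & ~ has_BergeK4 H])) /\
  (* ex_3(6,B) = 8 *)
  ((forall H : {set {set 'I_6}}, triple_system H -> 9 <= #|H| -> has_BergeK4 H) /\
   (exists H : {set {set 'I_6}}, [/\ triple_system H, #|H| = 8 & ~ has_BergeK4 H])).
Proof.
split; split.
- exact: (main ok5).
- exact: (@example 4 H5 nok5 (ltac:(vm_compute; reflexivity)) (ltac:(vm_compute; reflexivity))).
- exact: (main ok6).
- exact: (@example 5 H6 nok6 (ltac:(vm_compute; reflexivity)) (ltac:(vm_compute; reflexivity))).
Qed.
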